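(* There exists a mapping $\varrho$ on finite timed HT-traces $\mathbf{M}$ (preserving the length $\lambda\ge0$) such that for every metric formula $\varphi$ and every $k\in[0,\lambda)$: $\mathbf{M},k\models\varphi$ iff $\varrho(\mathbf{M}),\lambda-1-k\models\sigma(\varphi)$.
   Context: Metric formulas over $\mathcal{A}$: $\varphi ::= p \mid \bot \mid \varphi_1\otimes\varphi_2 \mid \bullet_I\varphi \mid \varphi_1\,\mathsf{S}_I\,\varphi_2 \mid \varphi_1\,\mathsf{T}_I\,\varphi_2 \mid \bigcirc_I\varphi \mid \varphi_1\,\mathsf{U}_I\,\varphi_2 \mid \varphi_1\,\mathsf{R}_I\,\varphi_2$, $\otimes\in\{\to,\wedge,\vee\}$, $I=[m,n)$, $m\in\mathbb{N}$, $n\in\mathbb{N}\cup\{\omega\}$. Derived: $\neg\varphi=\varphi\to\bot$, $\top=\neg\bot$, $\blacksquare_I\varphi=\bot\,\mathsf{T}_I\,\varphi$, eventually before $=\top\,\mathsf{S}_I\,\varphi$, $\widehat{\bullet}_I\varphi=\bullet_I\varphi\vee\neg\bullet_I\top$, $\Box_I\varphi=\bot\,\mathsf{R}_I\,\varphi$, $\Diamond_I\varphi=\top\,\mathsf{U}_I\,\varphi$, $\widehat{\bigcirc}_I\varphi=\bigcirc_I\varphi\vee\neg\bigcirc_I\top$. Timed HT-trace $\mathbf{M}=(\langle\mathbf{H},\mathbf{T}\rangle,\tau)$ of length $\lambda$: $H_i\subseteq T_i\subseteq\mathcal{A}$, $\tau:[0,\lambda)\to\mathbb{N}$, $\tau(0)=0$,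 $\tau(i)\le\tau(i+1)$. Satisfaction at $k$: $\bot$ never; $p$ iff $p\in H_k$; $\wedge,\vee$ usual; $\varphi\to\psi$ iff for both $\mathbf{M}'=\mathbf{M}$ and $\mathbf{M}'=(\langle\mathbf{T},\mathbf{T}\rangle,\tau)$, $\mathbf{M}',k\not\models\varphi$ or $\mathbf{M}',k\models\psi$; $\bullet_I\varphi$: $k>0$, $\varphi$ at $k-1$, $\tau(k)-\tau(k-1)\in I$; $\varphi\,\mathsf{S}_I\,\psi$: some $j\in[0,k]$ with $\tau(k)-\tau(j)\in I$, $\psi$ at $j$, $\varphi$ at all $i\in(j,k]$; $\varphi\,\mathsf{T}_I\,\psi$: for all such $j$, $\psi$ at $j$ or $\varphi$ at some $i\in(j,k]$; $\bigcirc_I\varphi$: $k+1<\lambda$, $\varphi$ at $k+1$, $\tau(k+1)-\tau(k)\in I$; $\varphi\,\mathsf{U}_I\,\psi$: some $j\in[k,\lambda)$ with $\tau(j)-\tau(k)\in I$, $\psi$ at $j$, $\varphi$ at all $i\in[k,j)$; $\varphi\,\mathsf{R}_I\,\psi$: for all such $j$, $\psi$ at $j$ or $\varphi$ at some $i\in[k,j)$. $\sigma(\varphi)$ replaces each connective by its swapped-time version: $\mathsf{U}_I/\mathsf{S}_I$, $\mathsf{R}_I/\mathsf{T}_I$, $\bigcirc_I/\bullet_I$, $\widehat{\bigcirc}_I/\widehat{\bullet}_I$, $\Box_I/\blacksquare_I$, $\Diamond_I$ / eventually before ($\top\,\mathsf{S}_I\,\cdot$). *)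

(* Defs.v *)
From Stdlib Require Import Arith.

Set Implicit Arguments.

(* Interval I = [m, n) with m : nat and n : nat or omega (None = omega). *)
Record interval := Intv { ilo : nat; ihi : option nat }.

Definition in_intv (I : interval) (d : nat) : Prop :=
  ilo I <= d /\ match ihi I with None => True | Some n => d < n end.

Inductive formula (A : Type) : Type :=
| FAtom : A -> formula A
| FBot : formula A
| FImpl : formula A -> formula A -> formula A
| FAnd : formula A -> formula A -> formula A
| FOr : formula A -> formula A -> formula A
| FPrev : interval -> formula A -> formula A
| FSince : interval -> formula A -> formula A -> formula A
| FTrigger : interval -> formula A -> formula A -> formula A
| FNext : interval -> formula A -> formula A
| FUntil : interval -> formula A -> formula A -> formula A
| FRelease : interval -> formula A -> formula A -> formula A.

Arguments FBot {A}.

Record trace (A : Type) := Trace {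
  len : nat;
  Hs : nat -> A -> Prop;
  Ts : nat -> A -> Prop;
  tau : nat -> nat }.

Definition valid_trace (A : Type) (M : trace A) : Prop :=
  (forall i, i < len M -> forall p, Hs M i p -> Ts M i p) /\
  (0 < len M -> tau M 0 = 0) /\
  (forall i, i + 1 < len M -> tau M i <= tau M (i + 1)).

(* Satisfaction; H is the current "here" valuation (H of M, or T of M). *)
Fixpoint sat_gen (A : Type) (H T : nat -> A -> Prop) (tau : nat -> nat)
  (lam : nat) (k : nat) (phi : formula A) {struct phi} : Prop :=
  match phi with
  | FAtom p => H k p
  | FBot => False
  | FAnd f g => sat_gen H T tau lam k f /\ sat_gen H T tau lam k g
  | FOr f g => sat_gen H T tau lam k f \/ sat_gen H T tau lam k g
  | FImpl f g =>
      (~ sat_gen H T tau lam k f \/ sat_gen H T tau lam k g) /\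
      (~ sat_gen T T tau lam k f \/ sat_gen T T tau lam k g)
  | FPrev J f =>
      0 < k /\ sat_gen H T tau lam (k - 1) f /\ in_intv J (tau k - tau (k - 1))
  | FSince J f g =>
      exists j, j <= k /\ in_intv J (tau k - tau j) /\ sat_gen H T tau lam j g /\
        forall i, j < i -> i <= k -> sat_gen H T tau lam i f
  | FTrigger J f g =>
      forall j, j <= k -> in_intv J (tau k - tau j) ->
        sat_gen H T tau lam j g \/
        exists i, j < i /\ i <= k /\ sat_gen H T tau lam i f
  | FNext J f =>
      k + 1 < lam /\ sat_gen H T tau lam (k + 1) f /\ in_intv J (tau (k + 1) - tau k)
  | FUntil J f g =>
      exists j, k <= j /\ j < lam /\ in_intv J (tau j - tau k) /\
        sat_gen H T tau lam j g /\
        forall i, k <= i -> i < j -> sat_gen H T tau lam i f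
  | FRelease J f g =>
      forall j, k <= j -> j < lam -> in_intv J (tau j - tau k) ->
        sat_gen H T tau lam j g \/
        exists i, k <= i /\ i < j /\ sat_gen H T tau lam i f
  end.

Definition sat (A : Type) (M : trace A) (k : nat) (phi : formula A) : Prop :=
  sat_gen (Hs M) (Ts M) (tau M) (len M) k phi.

Fixpoint sigma (A : Type) (phi : formula A) : formula A :=
  match phi with
  | FAtom p => FAtom p
  | FBot => FBot
  | FImpl f g => FImpl (sigma f) (sigma g)
  | FAnd f g => FAnd (sigma f) (sigma g)
  | FOr f g => FOr (sigma f) (sigma g)
  | FPrev J f => FNext J (sigma f)
  | FSince J f g => FUntil J (sigma f) (sigma g)
  | FTrigger J f g => FRelease J (sigma f) (sigma g)
  | FNext J f => FPrev J (sigma f)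
  | FUntil J f g => FSince J (sigma f) (sigma g)
  | FRelease J f g => FTrigger J (sigma f) (sigma g)
  end.

(* Main.v *)
Require Import Defs.
From Stdlib Require Import Arith Lia.

Section S.
Variable A : Type.
Variable n : nat.
Variable t : nat -> nat.
Hypothesis mono : forall i j, i <= j -> j < n -> t i <= t j.

Definition rv (H : nat -> A -> Prop) (i : nat) := H (n - 1 - i).
Definition t' (i : nat) := t (n - 1) - t (n - 1 - i).

Lemma tdiff : forall j' k', k' <= j' -> j' < n ->
  t' j' - t' k' = t (n - 1 - k') - t (n - 1 - j').
Proof.
  intros j' k' H1 H2. unfold t'.
  assert (t (n-1-j') <= t (n-1-k')) by (apply mono; lia).
  assert (t (n-1-k') <= t (n-1)) by (apply mono; lia).
  lia.
Qed.

Lemma nn : forall k, k < n -> n - 1 - (n - 1 - k) = k.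
Proof. intros; lia. Qed.

Lemma main : forall (phi : formula A) H T k, k < n ->
  (sat_gen H T t n k phi <-> sat_gen (rv H) (rv T) t' n (n - 1 - k) (sigma phi)).
Proof.
  induction phi; intros H T k Hk; simpl.
  - unfold rv. rewrite nn by lia. tauto.
  - tauto.
  - rewrite (IHphi1 H T k Hk), (IHphi2 H T k Hk), (IHphi1 T T k Hk), (IHphi2 T T k Hk). tauto.
  - rewrite (IHphi1 H T k Hk), (IHphi2 H T k Hk). tauto.
  - rewrite (IHphi1 H T k Hk), (IHphi2 H T k Hk). tauto.
  -
    split.
    + intros [H0 [H1 H2]]. split; [lia|]. split.
      * replace (n - 1 - k + 1) with (n - 1 - (k - 1)) by lia.
        apply IHphi. lia. auto.
      * rewrite tdiff by lia. rewrite !nn by lia. replace (n - 1 - (n - 1 - k + 1)) with (k - 1) by lia. auto.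
    + intros [H0 [H1 H2]]. split; [lia|]. split.
      * apply IHphi; [lia|].
        replace (n - 1 - (k - 1)) with (n - 1 - k + 1) by lia. auto.
      * rewrite tdiff in H2 by lia. rewrite !nn in H2 by lia.
        replace (n - 1 - (n - 1 - k + 1)) with (k - 1) in H2 by lia. auto.
  -
    split.
    + intros [j [H0 [H1 [H2 H3]]]]. exists (n - 1 - j).
      split; [lia|]. split; [lia|]. split.
      * rewrite tdiff by lia. rewrite !nn by lia. auto.
      * split. apply IHphi2; [lia|]; auto.
        intros i0 Hi1 Hi2. rewrite <- (nn i0) by lia. apply IHphi1; [lia|].
        apply H3; lia.
    + intros [j [H0 [H1 [H2 [H3 H4]]]]]. exists (n - 1 - j).
      rewrite tdiff in H2 by lia. rewrite nn in H2 by lia.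
      split; [lia|]. split; [auto|]. split.
      * apply IHphi2; [lia|]. rewrite nn by lia. auto.
      * intros i0 Hi1 Hi2. apply IHphi1; [lia|]. apply H4; lia.
  -
    split.
    + intros Hf j' H0 H1 H2.
      rewrite tdiff in H2 by lia. rewrite nn in H2 by lia.
      destruct (Hf (n - 1 - j') ltac:(lia) H2) as [Hg | [i0 [Hi1 [Hi2 Hi3]]]].
      * left. rewrite <- (nn j') by lia. apply IHphi2; [lia|]. auto.
      * right. exists (n - 1 - i0). split; [lia|]. split; [lia|].
        apply IHphi1; [lia|]. auto.
    + intros Hf j H0 H1.
      assert (Hj : in_intv i (t' (n - 1 - j) - t' (n - 1 - k))).
      { rewrite tdiff by lia. rewrite !nn by lia. auto. }
      destruct (Hf (n - 1 - j) ltac:(lia) ltac:(lia) Hj) as [Hg | [i' [Hi1 [Hi2 Hi3]]]].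
      * left. apply IHphi2; [lia|]. auto.
      * right. exists (n - 1 - i'). split; [lia|]. split; [lia|].
        apply IHphi1; [lia|]. rewrite nn by lia. auto.
  -
    split.
    + intros [H0 [H1 H2]]. split; [lia|]. split.
      * replace (n - 1 - k - 1) with (n - 1 - (k + 1)) by lia.
        apply IHphi; [lia|]; auto.
      * replace (n - 1 - k - 1) with (n - 1 - (k + 1)) by lia.
        rewrite tdiff by lia. rewrite !nn by lia. auto.
    + intros [H0 [H1 H2]]. split; [lia|]. split.
      * apply IHphi; [lia|].
        replace (n - 1 - (k + 1)) with (n - 1 - k - 1) by lia. auto.
      * replace (n - 1 - k - 1) with (n - 1 - (k + 1)) in H2 by lia.
        rewrite tdiff in H2 by lia. rewrite !nn in H2 by lia. auto.
  -
    split.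
    + intros [j [H0 [H1 [H2 [H3 H4]]]]]. exists (n - 1 - j).
      split; [lia|]. split.
      * rewrite tdiff by lia. rewrite !nn by lia. auto.
      * split. apply IHphi2; [lia|]; auto.
        intros i0 Hi1 Hi2. rewrite <- (nn i0) by lia. apply IHphi1; [lia|].
        apply H4; lia.
    + intros [j [H0 [H2 [H3 H4]]]]. exists (n - 1 - j).
      rewrite tdiff in H2 by lia. rewrite nn in H2 by lia.
      split; [lia|]. split; [lia|]. split; [auto|]. split.
      * apply IHphi2; [lia|]. rewrite nn by lia. auto.
      * intros i0 Hi1 Hi2. apply IHphi1; [lia|]. apply H4; lia.
  -
    split.
    + intros Hf j' H0 H2.
      rewrite tdiff in H2 by lia. rewrite nn in H2 by lia.
      destruct (Hf (n - 1 - j') ltac:(lia) ltac:(lia) H2) as [Hg | [i0 [Hi1 [Hi2 Hi3]]]].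
      * left. rewrite <- (nn j') by lia. apply IHphi2; [lia|]. auto.
      * right. exists (n - 1 - i0). split; [lia|]. split; [lia|].
        apply IHphi1; [lia|]. auto.
    + intros Hf j H0 H1 H2.
      assert (Hj : in_intv i (t' (n - 1 - k) - t' (n - 1 - j))).
      { rewrite tdiff by lia. rewrite !nn by lia. auto. }
      destruct (Hf (n - 1 - j) ltac:(lia) Hj) as [Hg | [i' [Hi1 [Hi2 Hi3]]]].
      * left. apply IHphi2; [lia|]. auto.
      * right. exists (n - 1 - i'). split; [lia|]. split; [lia|].
        apply IHphi1; [lia|]. rewrite nn by lia. auto.
Qed.
End S.

Definition rho (A : Type) (M : trace A) : trace A :=
  Trace (len M) (@rv A (len M) (Hs M)) (@rv A (len M) (Ts M)) (t' (len M) (tau M)).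

Lemma mono_of (A : Type) (M : trace A) : valid_trace M ->
  forall i j, i <= j -> j < len M -> tau M i <= tau M j.
Proof.
  intros [_ [_ Hm]] i j Hij. induction Hij; intros Hj; [lia|].
  specialize (Hm m). rewrite Nat.add_1_r in Hm. specialize (Hm ltac:(lia)).
  specialize (IHHij ltac:(lia)). lia.
Qed.

Theorem lemma1 (A : Type) :
  exists rho : trace A -> trace A,
    forall M : trace A, valid_trace M ->
      valid_trace (rho M) /\ len (rho M) = len M /\
      forall (phi : formula A) (k : nat), k < len M ->
        (sat M k phi <-> sat (rho M) (len M - 1 - k) (sigma phi)).
Proof.
  exists (@rho A). intros M HV.
  pose proof (@mono_of A M HV) as Hm.
  split; [|split; [reflexivity|]].
  - destruct HV as [H1 _]. split; [|split]; simpl.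
    + intros i Hi p. unfold rv. apply H1. lia.
    + intros _. unfold t'. rewrite Nat.sub_0_r. lia.
    + intros i Hi. unfold t'.
      assert (tau M (len M - 1 - (i + 1)) <= tau M (len M - 1 - i)) by (apply Hm; lia).
      assert (tau M (len M - 1 - i) <= tau M (len M - 1)) by (apply Hm; lia).
      lia.
  - intros phi k Hk. unfold sat. simpl. apply main; auto.
Qed.
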